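(* In the upper half-space model $\mathbb{H}^3=\{x_3>0\}$ with metric $\frac{1}{x_3^2}(dx_1^2+dx_2^2+dx_3^2)$, let $E$ be a complete end of revolution about the $x_3$-axis with profile curve $\gamma:[0,\infty)\to\mathbb{H}^3$, $\gamma(s)=(\gamma_1(s),0,\gamma_2(s))$, parametrized by hyperbolic arc length, $\gamma_1>0$. If $E$ is non-parabolic, then $\sup_{s\in[0,\infty)}\gamma_1(s)<\infty$.
   Context: $E=\{(\gamma_1(s)\cos\theta,\gamma_1(s)\sin\theta,\gamma_2(s)): s\ge0,\theta\in[0,2\pi)\}$ with the induced metric; arc length parametrization means $(\dot\gamma_1^2+\dot\gamma_2^2)/\gamma_2^2=1$. An end is parabolic if every bounded harmonic function on it is determined by its boundary values. *)

(* Defs.v *)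
From Stdlib Require Import Reals.
From Coquelicot Require Import Coquelicot.
Open Scope R_scope.

(* A function on [0,oo) that is smooth up to the boundary point 0
   (all derivatives exist at every s >= 0; at s = 0 this uses a
   neighbourhood, i.e. g extends smoothly a little past 0). *)
Definition smooth_on_halfline (g : R -> R) : Prop :=
  forall (n : nat) (x : R), 0 <= x -> ex_derive_n g n x.

(* Profile curve gamma(s) = (g1 s, 0, g2 s) in the upper half-space model,
   smooth, with g1 > 0, g2 > 0 (inside H^3), parametrized by hyperbolic
   arc length: (g1'^2 + g2'^2) / g2^2 = 1. *)
Definition rev_end_profile (g1 g2 : R -> R) : Prop :=
  smooth_on_halfline g1 /\ smooth_on_halfline g2 /\
  (forall s, 0 <= s -> 0 < g1 s /\ 0 < g2 s) /\
  (forall s, 0 <= s ->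
     ((Derive g1 s) ^ 2 + (Derive g2 s) ^ 2) / (g2 s) ^ 2 = 1).

(* In coordinates (s, theta), the induced metric on E is
   ds^2 + w(s)^2 dtheta^2 with warping function w = g1 / g2
   (hyperbolic radius of the circle of rotation). *)
Definition warp (g1 g2 : R -> R) (s : R) : R := g1 s / g2 s.

Definition cont2 (h : R -> R -> R) (s t : R) : Prop :=
  continuous (fun p : R * R => h (fst p) (snd p)) (s, t).

Definition C2_interior (u us ut uss ust utt : R -> R -> R) : Prop :=
  forall s t, 0 < s ->
    is_derive (fun x => u x t) s (us s t) /\
    is_derive (fun y => u s y) t (ut s t) /\
    is_derive (fun x => us x t) s (uss s t) /\
    is_derive (fun y => us s y) t (ust s t) /\
    is_derive (fun y => ut s y) t (utt s t) /\
    cont2 u s t /\ cont2 us s t /\ cont2 ut s t /\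
    cont2 uss s t /\ cont2 ust s t /\ cont2 utt s t.

(* Laplace-Beltrami equation for ds^2 + w^2 dtheta^2:
   u_ss + (w'/w) u_s + u_tt / w^2 = 0. *)
Definition harmonic_interior (g1 g2 : R -> R) (u : R -> R -> R) : Prop :=
  exists us ut uss ust utt : R -> R -> R,
    C2_interior u us ut uss ust utt /\
    forall s t, 0 < s ->
      uss s t + (Derive (warp g1 g2) s / warp g1 g2 s) * us s t
        + utt s t / (warp g1 g2 s) ^ 2 = 0.

(* A bounded harmonic function on the end E (including its boundary
   circle s = 0): a function of (s, theta), 2pi-periodic in theta,
   continuous on [0,oo) x R, bounded, harmonic in the interior. *)
Definition bounded_harmonic_on_end (g1 g2 : R -> R) (u : R -> R -> R) : Prop :=
  (forall s t, 0 <= s -> u s (t + 2 * PI) = u s t) /\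
  (forall s t, 0 <= s -> forall eps, 0 < eps -> exists delta, 0 < delta /\
     forall s' t', 0 <= s' -> Rabs (s' - s) < delta -> Rabs (t' - t) < delta ->
       Rabs (u s' t' - u s t) < eps) /\
  (exists M, forall s t, 0 <= s -> Rabs (u s t) <= M) /\
  harmonic_interior g1 g2 u.

Definition parabolic_end (g1 g2 : R -> R) : Prop :=
  forall u v : R -> R -> R,
    bounded_harmonic_on_end g1 g2 u -> bounded_harmonic_on_end g1 g2 v ->
    (forall t, u 0 t = v 0 t) ->
    forall s t, 0 <= s -> u s t = v s t.

(* Main.v *)
Require Import Defs.
From Stdlib Require Import Reals Lra Classical ClassicalEpsilon.
From Coquelicot Require Import Coquelicot.
Open Scope R_scope.

Lemma d_plus (f g : R -> R) x a b : is_derive f x a -> is_derive g x b ->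
  is_derive (fun y => f y + g y) x (a + b).
Proof. intros; now apply (is_derive_plus f g). Qed.
Lemma d_minus (f g : R -> R) x a b : is_derive f x a -> is_derive g x b ->
  is_derive (fun y => f y - g y) x (a - b).
Proof. intros; now apply (is_derive_minus f g). Qed.
Lemma d_mult (f g : R -> R) x a b : is_derive f x a -> is_derive g x b ->
  is_derive (fun y => f y * g y) x (a * g x + f x * b).
Proof. intros; apply (is_derive_mult f g); auto. intros; apply Rmult_comm. Qed.
Lemma d_scal k (f : R -> R) x a : is_derive f x a -> is_derive (fun y => k * f y) x (k * a).
Proof. apply is_derive_scal. Qed.
Lemma d_ext (f g : R -> R) x a b : (forall y, f y = g y) -> a = b -> is_derive f x a -> is_derive g x b.
Proof. intros H -> Hd. now apply (is_derive_ext f g). Qed.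

Lemma der_cpt (f : R -> R) x a : is_derive f x a -> continuity_pt f x.
Proof. intros H. apply continuity_pt_filterlim. apply (ex_derive_continuous f). now exists a. Qed.

Lemma cpt_eps (f : R -> R) x : continuity_pt f x -> forall eps, 0 < eps ->
  exists del, 0 < del /\ forall y, Rabs (y - x) < del -> Rabs (f y - f x) < eps.
Proof.
  unfold continuity_pt, continue_in, limit1_in, limit_in; simpl; unfold R_dist.
  intros H eps He. destruct (H eps He) as [d [Hd Hy]]. exists d; split; auto.
  intros y Hyx. destruct (Req_dec y x) as [->|Hne].
  - rewrite Rminus_diag, Rabs_R0; lra.
  - apply Hy. unfold D_x, no_cond. repeat split; auto.
Qed.

Lemma eps_cpt (f : R -> R) x : (forall eps, 0 < eps ->
  exists del, 0 < del /\ forall y, Rabs (y - x) < del -> Rabs (f y - f x) < eps) -> continuity_pt f x.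
Proof.
  unfold continuity_pt, continue_in, limit1_in, limit_in; simpl; unfold R_dist.
  intros H eps He. destruct (H eps He) as [d [Hd Hy]]. exists d; split; auto.
  intros y [_ Hyx]. auto.
Qed.

Section Prof.
Variables g1 g2 : R -> R.
Hypothesis Hp : rev_end_profile g1 g2.

Lemma prof_der x : 0 <= x -> ex_derive g1 x /\ ex_derive g2 x.
Proof. destruct Hp as [H1 [H2 _]]. intros Hx. split; [exact (H1 1%nat x Hx)|exact (H2 1%nat x Hx)]. Qed.
Lemma prof_pos x : 0 <= x -> 0 < g1 x /\ 0 < g2 x.
Proof. destruct Hp as [_ [_ [H _]]]. auto. Qed.

Lemma warp_ex x : 0 <= x -> ex_derive (warp g1 g2) x.
Proof. intros Hx. destruct (prof_der x Hx). destruct (prof_pos x Hx). unfold warp.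
  apply ex_derive_div; auto; lra. Qed.
Lemma warp_pos x : 0 <= x -> 0 < warp g1 g2 x.
Proof. intros Hx. destruct (prof_pos x Hx). unfold warp. now apply Rdiv_lt_0_compat. Qed.

Definition qe x := / warp g1 g2 (Rabs x).
Definition phi s := RInt qe 0 s.

Lemma qe_cont x : continuous qe x.
Proof.
  unfold qe. apply (continuous_Rinv_comp (fun y => warp g1 g2 (Rabs y))).
  - exact (continuous_comp Rabs (warp g1 g2) x (continuous_Rabs x)
      (ex_derive_continuous _ _ (warp_ex _ (Rabs_pos x)))).
  - apply Rgt_not_eq, warp_pos, Rabs_pos.
Qed.
Lemma qe_pos x : 0 < qe x.
Proof. unfold qe. apply Rinv_0_lt_compat, warp_pos, Rabs_pos. Qed.

Lemma phi_der x : is_derive phi x (qe x).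
Proof.
  apply is_derive_RInt with (a := 0).
  - apply filter_forall. intros b. apply RInt_correct, ex_RInt_continuous. intros; apply qe_cont.
  - apply qe_cont.
Qed.

Lemma phi0 : phi 0 = 0.
Proof. unfold phi. now rewrite RInt_point. Qed.

Lemma phi_mono x y : x <= y -> phi x <= phi y.
Proof.
  intros Hxy. destruct (MVT_gen phi x y qe) as [c [_ Hc]].
  - intros; apply phi_der.
  - intros; eapply der_cpt, phi_der.
  - pose proof (qe_pos c). nra.
Qed.

Lemma qe_der s : 0 < s -> is_derive qe s (- Derive (warp g1 g2) s / (warp g1 g2 s)^2).
Proof.
  intros Hs. apply is_derive_ext_loc with (f := fun y => / warp g1 g2 y).
  - apply locally_interval with (a := 0) (b := p_infty); simpl; auto.
    intros y Hy _. unfold qe. rewrite Rabs_pos_eq; lra.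
  - apply is_derive_inv. apply Derive_correct, warp_ex; lra.
    apply Rgt_not_eq, warp_pos; lra.
Qed.

Lemma logbound s : 0 <= s -> ln (g1 s) - ln (g1 0) <= phi s.
Proof.
  intros Hs.
  set (h := fun y => ln (g1 y) - phi y).
  set (dh := fun y => Derive g1 y / g1 y - qe y).
  assert (Hd : forall y, 0 <= y -> is_derive h y (dh y)).
  { intros y Hy. unfold h, dh. apply d_minus; [|apply phi_der].
    destruct (prof_der y Hy) as [D1 _]. destruct (prof_pos y Hy) as [P1 _].
    pose proof (is_derive_comp ln g1 y (/ g1 y) (Derive g1 y) (is_derive_ln _ P1) (Derive_correct _ _ D1)) as K.
    eapply d_ext; [intros; reflexivity| |exact K]. simpl. change (Derive g1 y * / g1 y = Derive g1 y / g1 y). reflexivity. }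
  destruct (MVT_gen h 0 s dh) as [c [Hc Heq]].
  - intros x Hx. apply Hd. rewrite Rmin_left in Hx; lra.
  - intros x Hx. eapply der_cpt, Hd. rewrite Rmin_left in Hx; lra.
  - rewrite Rmin_left in Hc by lra. assert (Hc0 : 0 <= c) by lra.
    assert (dh c <= 0).
    { unfold dh, qe. rewrite Rabs_pos_eq by lra. destruct (prof_pos c Hc0) as [P1 P2].
      destruct Hp as [_ [_ [_ Ha]]]. specialize (Ha c Hc0).
      assert (E : (Derive g1 c)^2 + (Derive g2 c)^2 = (g2 c)^2).
      { apply (f_equal (fun z => z * (g2 c)^2)) in Ha. rewrite Rmult_1_l in Ha. rewrite <- Ha.
        field. lra. }
      assert (Derive g1 c <= g2 c) by nra.
      unfold warp. replace (/ (g1 c / g2 c)) with (g2 c / g1 c) by (field; lra).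
      unfold Rdiv. assert (0 < / g1 c) by (apply Rinv_0_lt_compat; lra). nra. }
    unfold h in Heq. rewrite phi0 in Heq. nra.
Qed.

End Prof.



Ltac rabs := unfold Rabs in *; repeat destruct Rcase_abs; lra.

Definition clamp (c d y : R) := Rmax c (Rmin d y).
Lemma clamp_in c d y : c <= d -> c <= clamp c d y <= d.
Proof. intros. unfold clamp, Rmax, Rmin. repeat destruct Rle_dec; lra. Qed.
Lemma clamp_id c d y : c <= y <= d -> clamp c d y = y.
Proof. intros. unfold clamp, Rmax, Rmin. repeat destruct Rle_dec; lra. Qed.
Lemma clamp_lip c d y z : c <= d -> Rabs (clamp c d y - clamp c d z) <= Rabs (y - z).
Proof. intros. unfold clamp, Rmax, Rmin. repeat destruct Rle_dec; rabs. Qed.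

Lemma unif2d (F : R -> R -> R) a b c d :
 (forall x y, a<=x<=b -> c<=y<=d -> forall eps, 0<eps -> exists del, 0<del /\
   forall x' y', a<=x'<=b -> c<=y'<=d -> Rabs (x'-x) < del -> Rabs (y'-y) < del ->
   Rabs (F x' y' - F x y) < eps) ->
 forall eps, 0 < eps -> exists d0, 0 < d0 /\ forall x y x' y', a<=x<=b -> c<=y<=d ->
   a<=x'<=b -> c<=y'<=d -> Rabs (x-x') < d0 -> Rabs (y-y') < d0 ->
   Rabs (F x y - F x' y') < eps.
Proof.
  intros H eps He.
  assert (Ex : forall u v, exists del : posreal, a<=u<=b -> c<=v<=d -> forall x' y',
     a<=x'<=b -> c<=y'<=d -> Rabs (x'-u) < 2*del -> Rabs (y'-v) < 2*del ->
     Rabs (F x' y' - F u v) < eps/2).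
  { intros u v. destruct (classic (a<=u<=b /\ c<=v<=d)) as [[Hu Hv]|Hn].
    - destruct (H u v Hu Hv (eps/2)) as [del [Hd Hdel]]; [lra|].
      assert (Hd2 : 0 < del/2) by lra. exists (mkposreal _ Hd2). simpl. intros _ _ x' y' ? ? ? ?.
      apply Hdel; auto; lra.
    - exists (mkposreal 1 Rlt_0_1). intros; exfalso; auto. }
  set (delta := fun u v => proj1_sig (constructive_indefinite_description _ (Ex u v))).
  assert (Hdelta : forall u v, a<=u<=b -> c<=v<=d -> forall x' y',
     a<=x'<=b -> c<=y'<=d -> Rabs (x'-u) < 2*delta u v -> Rabs (y'-v) < 2*delta u v ->
     Rabs (F x' y' - F u v) < eps/2).
  { intros u v. unfold delta. destruct (constructive_indefinite_description _ (Ex u v)). simpl. auto. }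
  destruct (compactness_value_2d a b c d delta) as [d0 Hd0].
  exists d0. split; [apply cond_pos|].
  intros x y x' y' Hx Hy Hx' Hy' Hxx Hyy.
  apply NNPP. intro Hn. apply (Hd0 x y Hx Hy). intros [u [v [Hu [Hv [Hxu [Hyv Hdd]]]]]].
  apply Hn.
  assert (pos : 0 < delta u v) by apply cond_pos.
  pose proof (Hdelta u v Hu Hv x y Hx Hy ltac:(rabs) ltac:(rabs)).
  pose proof (Hdelta u v Hu Hv x' y' Hx' Hy' ltac:(rabs) ltac:(rabs)).
  rabs.
Qed.

Lemma max2d (F : R -> R -> R) a b c d : a <= b -> c <= d ->
 (forall x y, a<=x<=b -> c<=y<=d -> forall eps, 0<eps -> exists del, 0<del /\
   forall x' y', a<=x'<=b -> c<=y'<=d -> Rabs (x'-x) < del -> Rabs (y'-y) < del ->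
   Rabs (F x' y' - F x y) < eps) ->
 exists xm ym, a<=xm<=b /\ c<=ym<=d /\ forall x y, a<=x<=b -> c<=y<=d -> F x y <= F xm ym.
Proof.
  intros Hab Hcd H. pose proof (unif2d F a b c d H) as U.
  assert (Ex : forall x, exists y, c<=y<=d /\ forall y', c<=y'<=d ->
     F (clamp a b x) y' <= F (clamp a b x) y).
  { intros x. pose proof (clamp_in a b x Hab) as Hx.
    destruct (continuity_ab_maj (fun y => F (clamp a b x) (clamp c d y)) c d Hcd) as [y [Hy2 Hy1]].
    - intros z _. apply eps_cpt. intros eps He. destruct (U eps He) as [d0 [Hd0 Hu]].
      exists d0. split; auto. intros y Hyz. apply Hu; auto using clamp_in.
      rewrite Rminus_diag, Rabs_R0; lra.
      pose proof (clamp_lip c d y z Hcd); lra.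
    - exists y. split; auto. intros y' Hy'. specialize (Hy2 y' Hy').
      rewrite (clamp_id c d y'), (clamp_id c d y) in Hy2 by auto. auto. }
  set (ym := fun x => proj1_sig (constructive_indefinite_description _ (Ex x))).
  assert (Hym : forall x, c <= ym x <= d /\ forall y', c<=y'<=d ->
     F (clamp a b x) y' <= F (clamp a b x) (ym x)).
  { intros x. unfold ym. destruct (constructive_indefinite_description _ (Ex x)). simpl. auto. }
  set (m := fun x => F (clamp a b x) (ym x)).
  destruct (continuity_ab_maj m a b Hab) as [xm [Hm2 Hm1]].
  - intros z _. apply eps_cpt. intros eps He. destruct (U eps He) as [d0 [Hd0 Hu]].
    exists d0. split; auto. intros y Hyz. unfold m.
    pose proof (clamp_lip a b y z Hab). pose proof (clamp_in a b y Hab). pose proof (clamp_in a b z Hab).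
    destruct (Hym y) as [Hy1 Hy2]. destruct (Hym z) as [Hz1 Hz2].
    specialize (Hy2 (ym z) Hz1). specialize (Hz2 (ym y) Hy1).
    assert (A1 : Rabs (F (clamp a b y) (ym z) - F (clamp a b z) (ym z)) < eps).
    { apply Hu; auto. lra. rewrite Rminus_diag, Rabs_R0; lra. }
    assert (A2 : Rabs (F (clamp a b z) (ym y) - F (clamp a b y) (ym y)) < eps).
    { apply Hu; auto. rewrite Rabs_minus_sym; lra. rewrite Rminus_diag, Rabs_R0; lra. }
    rabs.
  - exists xm, (ym xm). destruct (Hym xm) as [Hy1 Hy2]. split; auto. split; auto.
    intros x y Hx Hy. replace (F xm (ym xm)) with (m xm) by (unfold m; now rewrite clamp_id).
    apply Rle_trans with (m x); [|apply Hm2; auto].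
    unfold m. destruct (Hym x) as [_ Hx2]. specialize (Hx2 y Hy). rewrite (clamp_id a b x) in Hx2 |- * by auto. auto.
Qed.

Lemma loc_pos (f : R -> R) x l : is_derive f x l -> 0 < l -> forall r, 0 < r ->
  exists h, 0 < h < r /\ f x < f (x + h).
Proof.
  intros Hd Hl r Hr. apply is_derive_Reals in Hd. destruct (Hd (l/2) ltac:(lra)) as [del Hdel].
  pose proof (cond_pos del). set (h := Rmin del r / 2).
  assert (0 < h < r /\ h < del) by (unfold h, Rmin; destruct Rle_dec; lra).
  exists h. split; [lra|]. specialize (Hdel h ltac:(lra) ltac:(rabs)).
  assert (Q : l/2 < (f (x+h) - f x)/h) by rabs.
  apply (Rmult_lt_compat_r h) in Q; [|lra].
  replace ((f (x+h) - f x)/h*h) with (f (x+h) - f x) in Q by (field; lra).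
  nra.
Qed.

Lemma loc_neg (f : R -> R) x l : is_derive f x l -> l < 0 -> forall r, 0 < r ->
  exists h, 0 < h < r /\ f x < f (x - h).
Proof.
  intros Hd Hl r Hr. apply is_derive_Reals in Hd. destruct (Hd (-l/2) ltac:(lra)) as [del Hdel].
  pose proof (cond_pos del). set (h := Rmin del r / 2).
  assert (0 < h < r /\ h < del) by (unfold h, Rmin; destruct Rle_dec; lra).
  exists h. split; [lra|]. specialize (Hdel (-h) ltac:(lra) ltac:(rabs)).
  assert (Q : (f (x + - h) - f x)/(-h) < l/2) by rabs.
  apply (Rmult_lt_compat_r h) in Q; [|lra]. unfold Rdiv in Q.
  replace (x - h) with (x + - h) by ring.
  replace ((f (x + - h) - f x) * / - h * h) with (- (f (x + - h) - f x)) in Q by (field; lra).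
  nra.
Qed.

Lemma max_test (g g' : R -> R) x g2 r : 0 < r ->
  (forall y, x - r < y < x + r -> is_derive g y (g' y)) -> is_derive g' x g2 ->
  (forall y, x - r < y < x + r -> g y <= g x) -> g' x = 0 /\ g2 <= 0.
Proof.
  intros Hr Hd Hd2 Hm.
  assert (Z : g' x = 0).
  { destruct (Rtotal_order (g' x) 0) as [Hn|[Hz|Hp]]; auto; exfalso.
    - destruct (loc_neg g x _ (Hd x ltac:(lra)) Hn r Hr) as [h [Hh Hgt]].
      specialize (Hm (x - h) ltac:(lra)). lra.
    - destruct (loc_pos g x _ (Hd x ltac:(lra)) Hp r Hr) as [h [Hh Hgt]].
      specialize (Hm (x + h) ltac:(lra)). lra. }
  split; auto. apply Rnot_lt_le. intro Hp.
  apply is_derive_Reals in Hd2. destruct (Hd2 (g2/2) ltac:(lra)) as [del Hdel].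
  pose proof (cond_pos del). set (k := Rmin del r / 2).
  assert (Hk : 0 < k < r /\ k < del) by (unfold k, Rmin; destruct Rle_dec; lra).
  assert (Pos : forall t, 0 < t <= k -> 0 < g' (x + t)).
  { intros t Ht. specialize (Hdel t ltac:(lra) ltac:(rabs)). rewrite Z, Rminus_0_r in Hdel.
    assert (Q : g2/2 < g' (x+t) / t) by rabs.
    apply (Rmult_lt_compat_r t) in Q; [|lra].
    replace (g' (x+t) / t * t) with (g' (x+t)) in Q by (field; lra). nra. }
  destruct (MVT_gen g (x + k/2) (x + k) g') as [c1 [Hc1 E1]].
  - intros y Hy. apply Hd. rewrite Rmin_left, Rmax_right in Hy by lra. lra.
  - intros y Hy. rewrite Rmin_left, Rmax_right in Hy by lra. eapply der_cpt, Hd. lra.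
  - destruct (MVT_gen g x (x + k/2) g') as [c2 [Hc2 E2]].
    + intros y Hy. apply Hd. rewrite Rmin_left, Rmax_right in Hy by lra. lra.
    + intros y Hy. rewrite Rmin_left, Rmax_right in Hy by lra. eapply der_cpt, Hd. lra.
    + rewrite Rmin_left, Rmax_right in Hc1, Hc2 by lra.
      assert (P1 : 0 < g' c1) by (replace c1 with (x + (c1 - x)) by ring; apply Pos; lra).
      assert (P2 : 0 <= g' c2).
      { destruct (Req_dec c2 x) as [->|Hne]; [lra|].
        left. replace c2 with (x + (c2 - x)) by ring; apply Pos; lra. }
      specialize (Hm (x + k) ltac:(lra)). nra.
Qed.

Definition boxc (F : R -> R -> R) x y := forall eps, 0 < eps -> exists del, 0 < del /\
  forall x' y', 0 <= x' -> Rabs (x' - x) < del -> Rabs (y' - y) < del -> Rabs (F x' y' - F x y) < eps.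

Lemma boxc_plus F G x y : boxc F x y -> boxc G x y -> boxc (fun s t => F s t + G s t) x y.
Proof.
  intros HF HG e He. destruct (HF (e/2) ltac:(lra)) as [d1 [H1 K1]]. destruct (HG (e/2) ltac:(lra)) as [d2 [H2 K2]].
  exists (Rmin d1 d2). split. unfold Rmin; destruct Rle_dec; lra.
  intros x' y' Hx Hxx Hyy. assert (Rmin d1 d2 <= d1 /\ Rmin d1 d2 <= d2) by (unfold Rmin; destruct Rle_dec; lra).
  specialize (K1 x' y' Hx ltac:(lra) ltac:(lra)). specialize (K2 x' y' Hx ltac:(lra) ltac:(lra)). rabs.
Qed.
Lemma boxc_minus F G x y : boxc F x y -> boxc G x y -> boxc (fun s t => F s t - G s t) x y.
Proof.
  intros HF HG e He. destruct (HF (e/2) ltac:(lra)) as [d1 [H1 K1]]. destruct (HG (e/2) ltac:(lra)) as [d2 [H2 K2]].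
  exists (Rmin d1 d2). split. unfold Rmin; destruct Rle_dec; lra.
  intros x' y' Hx Hxx Hyy. assert (Rmin d1 d2 <= d1 /\ Rmin d1 d2 <= d2) by (unfold Rmin; destruct Rle_dec; lra).
  specialize (K1 x' y' Hx ltac:(lra) ltac:(lra)). specialize (K2 x' y' Hx ltac:(lra) ltac:(lra)). rabs.
Qed.
Lemma boxc_fun1 (G : R -> R) x y : continuity_pt G x -> boxc (fun s t => G s) x y.
Proof.
  intros HG e He. destruct (cpt_eps G x HG e He) as [d [Hd K]]. exists d. split; auto.
Qed.

Lemma d_const (c x : R) : is_derive (fun _ => c) x 0.
Proof. apply (is_derive_const c x). Qed.

Lemma key g1 g2 (Hp : rev_end_profile g1 g2) (Hbig : forall L, exists s, 0 <= s /\ L < phi g1 g2 s) u v :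
  bounded_harmonic_on_end g1 g2 u -> bounded_harmonic_on_end g1 g2 v -> (forall t, u 0 t = v 0 t) ->
  forall s t, 0 <= s -> u s t <= v s t.
Proof.
  intros [Pu [Cu [[Mu HMu] Hu]]] [Pv [Cv [[Mv HMv] Hv]]] H0 s0 t0 Hs0.
  apply Rnot_lt_le; intro Hlt. set (a := u s0 t0 - v s0 t0). assert (Ha: 0 < a) by (unfold a; lra).
  set (M := Mu + Mv).
  assert (HM : forall s t, 0 <= s -> u s t - v s t <= M).
  { intros s t H; specialize (HMu s t H); specialize (HMv s t H); unfold M; rabs. }
  assert (M0 : 0 <= M) by (specialize (HMu s0 t0 Hs0); specialize (HMv s0 t0 Hs0); unfold M; rabs).
  set (P := phi g1 g2).
  assert (Pnn : 0 <= P s0) by (unfold P; rewrite <- (phi0 g1 g2); apply (phi_mono g1 g2 Hp); auto).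
  set (eps := a / (3 * (P s0 + 1))).
  assert (Hep : 0 < eps) by (unfold eps; apply Rdiv_lt_0_compat; lra).
  assert (Ee : eps * (P s0 + 1) = a/3) by (unfold eps; field; lra).
  destruct (Hbig ((M+1)/eps + P s0)) as [S [HS HSb]]. change (phi g1 g2 S) with (P S) in HSb.
  assert (Hq : 0 < (M+1)/eps) by (apply Rdiv_lt_0_compat; lra).
  assert (Epos : eps * P S > M + 1 + eps * P s0).
  { assert (E2 : (M+1)/eps*eps = M+1) by (field; lra). nra. }
  assert (HSs : s0 < S).
  { apply Rnot_le_lt; intro Hle. pose proof (phi_mono g1 g2 Hp S s0 Hle). fold P in H. lra. }
  set (del := a / (3 * (P S * P S + 1))).
  assert (Hdp : 0 < del) by (unfold del; apply Rdiv_lt_0_compat; nra).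
  assert (Ed : del * (P S * P S + 1) = a/3) by (unfold del; field; nra).
  set (F := fun s t => u s t - v s t - eps * P s + del * (P s * P s)).
  pose proof PI_RGT_0 as HPI.
  destruct (max2d F 0 S (t0 - 2*PI) (t0+2*PI)) as [sm [tm [Hsm [Htm Hmax]]]]; [lra|lra| |].
  { intros x y Hx Hy e He.
    assert (B : boxc F x y).
    { unfold F. apply boxc_plus; [apply boxc_minus; [apply boxc_minus|]|].
      - intros e' He'. apply Cu; lra.
      - intros e' He'. apply Cv; lra.
      - apply (boxc_fun1 (fun s => eps * P s)). eapply der_cpt, d_scal, phi_der; auto.
      - apply (boxc_fun1 (fun s => del * (P s * P s))). eapply der_cpt, d_scal, d_mult; apply phi_der; auto. }
    destruct (B e He) as [d [Hd K]]. exists d; split; auto. intros; apply K; auto; lra. }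
  assert (F0 : forall t, F 0 t = 0).
  { intros t. unfold F, P. rewrite H0, phi0. ring. }
  assert (FS : forall t, F S t < 2*a/3).
  { intros t. unfold F. specialize (HM S t HS). nra. }
  assert (Fs0 : 2*a/3 <= F s0 t0).
  { unfold F. fold a. assert (0 <= del * (P s0 * P s0)) by (apply Rmult_le_pos; nra). nra. }
  assert (Hm0 := Hmax s0 t0 ltac:(lra) ltac:(lra)).
  assert (Hsm0 : 0 < sm).
  { destruct (Req_dec sm 0) as [E|E]; [|lra]. rewrite E, F0 in Hm0. lra. }
  assert (HsmS : sm < S).
  { destruct (Req_dec sm S) as [E|E]; [|lra]. rewrite E in Hm0. specialize (FS tm). lra. }
  assert (Fper : forall t, F sm (t + 2*PI) = F sm t).
  { intros t. unfold F. rewrite Pu, Pv by lra. reflexivity. }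
  assert (Htm' : exists tm', t0 - 2*PI < tm' < t0 + 2*PI /\ F sm tm' = F sm tm).
  { destruct (Req_dec tm (t0 - 2*PI)) as [E|E].
    - exists t0. split; [lra|]. replace t0 with (tm + 2*PI) by lra. apply Fper.
    - destruct (Req_dec tm (t0 + 2*PI)) as [E'|E'].
      + exists t0. split; [lra|]. rewrite E'. symmetry; apply Fper.
      + exists tm. split; [lra|reflexivity]. }
  destruct Htm' as [tm' [Htm' Etm]].
  destruct Hu as [us [ut [uss [ust [utt [HCu HLu]]]]]].
  destruct Hv as [vs [vt [vss [vst [vtt [HCv HLv]]]]]].
  set (q := qe g1 g2).
  set (g' := fun s => us s tm' - vs s tm' - eps * q s + del * (q s * P s + P s * q s)).
  set (w := warp g1 g2 sm). set (Dw := Derive (warp g1 g2) sm).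
  set (q' := - Dw / w ^ 2).
  set (r := Rmin sm (S - sm)).
  assert (Hr : 0 < r /\ r <= sm /\ r <= S - sm) by (unfold r, Rmin; destruct Rle_dec; lra).
  destruct (max_test (fun s => F s tm') g' sm
     (uss sm tm' - vss sm tm' - eps * q' + del * ((q' * P sm + q sm * q sm) + (q sm * q sm + P sm * q')))
     r) as [Gs Gss].
  - lra.
  - intros y Hy. destruct (HCu y tm' ltac:(lra)) as [D1 _]. destruct (HCv y tm' ltac:(lra)) as [E1 _].
    unfold F, g'. apply d_plus; [apply d_minus; [apply d_minus; auto|]|].
    + apply d_scal, phi_der; auto.
    + apply d_scal, d_mult; apply phi_der; auto.
  - destruct (HCu sm tm' Hsm0) as [_ [_ [D3 _]]]. destruct (HCv sm tm' Hsm0) as [_ [_ [E3 _]]].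
    unfold g'. apply d_plus; [apply d_minus; [apply d_minus; auto|]|].
    + apply d_scal, qe_der; auto.
    + apply d_scal, d_plus; apply d_mult; try apply phi_der; try apply qe_der; auto.
  - intros y Hy. rewrite Etm. apply Hmax; lra.
  - set (r' := Rmin (tm' - (t0 - 2*PI)) (t0 + 2*PI - tm')).
    assert (Hr' : 0 < r' /\ r' <= tm' - (t0 - 2*PI) /\ r' <= t0 + 2*PI - tm')
      by (unfold r', Rmin; destruct Rle_dec; lra).
    destruct (max_test (fun t => F sm t) (fun t => ut sm t - vt sm t) tm' (utt sm tm' - vtt sm tm') r')
      as [_ Gtt].
    + lra.
    + intros y Hy. destruct (HCu sm y Hsm0) as [_ [D2 _]]. destruct (HCv sm y Hsm0) as [_ [E2 _]].
      apply d_ext with (f := fun z => u sm z - v sm z - eps * P sm + del * (P sm * P sm))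
        (a := ut sm y - vt sm y - 0 + 0). intros; reflexivity. simpl; lra.
      apply d_plus; [apply d_minus; [apply d_minus; eauto|]|]; apply d_const.
    + destruct (HCu sm tm' Hsm0) as [_ [_ [_ [_ [D5 _]]]]]. destruct (HCv sm tm' Hsm0) as [_ [_ [_ [_ [E5 _]]]]].
      apply d_minus; auto.
    + intros y Hy. rewrite Etm. apply Hmax; lra.
    + specialize (HLu sm tm' Hsm0). specialize (HLv sm tm' Hsm0). fold w Dw in HLu, HLv.
      assert (Hw : 0 < w) by (apply (warp_pos g1 g2 Hp); lra).
      assert (Hqw : q sm = / w) by (unfold q, qe; rewrite Rabs_pos_eq by lra; reflexivity).
      unfold g' in Gs. rewrite Hqw in Gs, Gss.
      assert (Euss : uss sm tm' = - (Dw / w) * us sm tm' - utt sm tm' / w ^ 2) by lra.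
      assert (Evss : vss sm tm' = - (Dw / w) * vs sm tm' - vtt sm tm' / w ^ 2) by lra.
      rewrite Euss, Evss in Gss. unfold q' in Gss.
      assert (Id : - (Dw / w) * us sm tm' - utt sm tm' / w ^ 2 - (- (Dw / w) * vs sm tm' - vtt sm tm' / w ^ 2) -
        eps * (- Dw / w ^ 2) + del * (- Dw / w ^ 2 * P sm + / w * / w + (/ w * / w + P sm * (- Dw / w ^ 2)))
        = - (Dw / w) * (us sm tm' - vs sm tm' - eps * / w + del * (/ w * P sm + P sm * / w))
          - (utt sm tm' - vtt sm tm') * / w ^ 2 + 2 * del * (/ w * / w)) by (field; lra).
      rewrite Id, Gs in Gss.
      assert (0 < / w ^ 2) by (apply Rinv_0_lt_compat; nra).
      assert (0 < / w * / w) by (assert (0 < / w) by (apply Rinv_0_lt_compat; lra); nra).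
      nra.
Qed.

Theorem proposition5p1 (g1 g2 : R -> R) :
  rev_end_profile g1 g2 ->
  ~ parabolic_end g1 g2 ->
  exists M : R, forall s : R, 0 <= s -> g1 s <= M.
Proof.
  intros Hp Hnp. apply NNPP; intro Hnb. apply Hnp.
  assert (Hbig : forall L, exists s, 0 <= s /\ L < phi g1 g2 s).
  { intros L. apply NNPP; intro Hn. apply Hnb.
    exists (exp (L + ln (g1 0))). intros s Hs.
    assert (Hle : phi g1 g2 s <= L) by (apply Rnot_lt_le; intro; apply Hn; exists s; auto).
    pose proof (logbound g1 g2 Hp s Hs). destruct (prof_pos g1 g2 Hp s Hs) as [P1 _].
    rewrite <- (exp_ln (g1 s)) by auto.
    destruct (Rle_lt_or_eq_dec (ln (g1 s)) (L + ln (g1 0))) as [Hl|Hl]; [lra| |].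
    - left; now apply exp_increasing.
    - rewrite Hl; lra. }
  intros u v Hu Hv H0 s t Hs. apply Rle_antisym.
  - exact (key g1 g2 Hp Hbig u v Hu Hv H0 s t Hs).
  - exact (key g1 g2 Hp Hbig v u Hv Hu (fun t => eq_sym (H0 t)) s t Hs).
Qed.
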